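(* Let $n \ge 2$ be an integer, $M$ a real $n\times n$ matrix, $\alpha := \frac1n s(M)$, $\beta := \frac1n q(M)$, and $\kappa := \frac{n\beta - \alpha^2}{n-1}$. Then: if $\alpha^2 < \beta$: $|\det M| \le \beta^{n/2}$; if $\alpha^2 = \beta$: $|\det M| \le |\alpha|\kappa^{\frac{n-1}{2}} = \beta^{n/2}$; if $\alpha^2 > \beta$: $|\det M| \le |\alpha|\kappa^{\frac{n-1}{2}} < \beta^{n/2}$.
   Context: For a real matrix $M$, $s(M)$ denotes the sum of all entries of $M$ and $q(M)$ the sum of the squares of all entries of $M$. *)

(* Defs.v *)
(* Real numbers are modelled by an arbitrary real closed field. *)
From HB Require Import structures.
From mathcomp Require Import all_boot all_order all_algebra.
Set Implicit Arguments. Unset Strict Implicit. Unset Printing Implicit Defensive.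
Import Order.TTheory GRing.Theory Num.Theory.
Local Open Scope ring_scope.

Definition msum (R : rcfType) (n : nat) (M : 'M[R]_n) : R :=
  \sum_(i < n) \sum_(j < n) M i j.

Definition msq (R : rcfType) (n : nat) (M : 'M[R]_n) : R :=
  \sum_(i < n) \sum_(j < n) (M i j) ^+ 2.

(* Main.v *)
Require Import Defs.
From HB Require Import structures.
From mathcomp Require Import all_boot all_order all_algebra.
From mathcomp Require Import ring lra.
Import Order.TTheory GRing.Theory Num.Theory.
Local Open Scope ring_scope.

Set Implicit Arguments. Unset Strict Implicit. Unset Printing Implicit Defensive.
Section H.
Variable R : rcfType.

Definition rn n (x : 'rV[R]_n) : R := \sum_(j < n) x 0 j ^+ 2.

Lemma rnE n (x : 'rV[R]_n) : (x *m x^T) 0 0 = rn x.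
Proof. by rewrite mxE /rn; apply: eq_bigr => j _; rewrite mxE expr2. Qed.

Lemma rn_ge0 n (x : 'rV[R]_n) : 0 <= rn x.
Proof. by apply: sumr_ge0 => j _; apply: sqr_ge0. Qed.

Lemma rn_eq0 n (x : 'rV[R]_n) : rn x = 0 -> x = 0.
Proof.
move=> h; apply/rowP => j; rewrite mxE.
have := @psumr_eq0P R _ _ _ (fun j _ => sqr_ge0 (x 0 j)) h j isT.
by move/eqP; rewrite sqrf_eq0 => /eqP.
Qed.

Lemma hadamard m n (A : 'M[R]_(m, n)) :
  0 <= \det (A *m A^T) /\ \det (A *m A^T) <= \prod_(i < m) rn (row i A).
Proof.
elim: m A => [|m IH] A.
  by rewrite det_mx00 big_ord0 lexx ler01.
pose a : 'rV[R]_n := usubmx (A : 'M_(1 + m, n)).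
pose B : 'M[R]_(m, n) := dsubmx (A : 'M_(1 + m, n)).
have eA : A = col_mx a B by rewrite vsubmxK.
have ra : row 0 A = a.
  by apply/rowP => j; rewrite !mxE; congr (A _ _); apply/val_inj.
have rB : forall i, row (lift ord0 i) A = row i B.
  by move=> i; apply/rowP => j; rewrite !mxE; congr (A _ _); apply/val_inj.
rewrite big_ord_recl ra.
under eq_bigr => i _ do rewrite rB.
case: (IH B) => G0 GH.
rewrite eA; clearbody a B; clear ra rB eA IH A.
rewrite -[m.+1]/(1 + m)%N.
have P0 : 0 <= rn a * \prod_i rn (row i B).
  by apply: mulr_ge0; [apply: rn_ge0 | apply: prodr_ge0 => i _; apply: rn_ge0].
have [/eqP/det0P [v vn0 vG] | dG] := eqVneq (\det (B *m B^T)) 0.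
  have vB : v *m B = 0.
    apply: rn_eq0; rewrite -rnE trmx_mul mulmxA -(mulmxA v) vG mul0mx.
    by rewrite mxE.
  have -> : \det (col_mx a B *m (col_mx a B)^T) = 0.
    apply/eqP/det0P; exists (row_mx (0 : 'rV_1) v).
      apply: contra vn0 => /eqP h; apply/eqP.
      by have := congr1 (@rsubmx _ _ _ _) h; rewrite row_mxKr => ->; rewrite linear0.
    by rewrite mulmxA mul_row_col mul0mx add0r vB mul0mx.
  by rewrite lexx P0.
set G := B *m B^T.
have Gu : G \in unitmx by rewrite unitmxE unitfE.
pose c := a *m B^T *m invmx G.
pose w := a - c *m B.
have wB : w *m B^T = 0.
  by rewrite /w mulmxBl -(mulmxA c) -/G /c -(mulmxA (a *m B^T)) mulVmx // mulmx1 subrr.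
have Bw : B *m w^T = 0 by rewrite -(trmxK B) -trmx_mul wB trmx0.
have eE : col_mx a B = block_mx (1%:M : 'M_1) c 0 (1%:M : 'M_m) *m col_mx w B.
  by rewrite mul_block_col !mul1mx mul0mx add0r /w subrK.
have dE : \det (block_mx (1%:M : 'M_1) c 0 (1%:M : 'M_m)) = 1.
  by rewrite det_ublock !det1 mulr1.
have -> : \det (col_mx a B *m (col_mx a B)^T) = rn w * \det G.
  rewrite eE trmx_mul mulmxA -(mulmxA _ (col_mx w B)) !det_mulmx det_tr dE mul1r mulr1.
  rewrite tr_col_mx mul_col_row wB Bw det_ublock det_mx11 rnE.
  done.
have ra : rn a = rn w + rn (c *m B).
  have ea : a = w + c *m B by rewrite /w subrK.
  rewrite -!rnE ea.
  rewrite linearD /= mulmxDl !mulmxDr (trmx_mul c) mulmxA wB mul0mx addr0.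
  by rewrite -(mulmxA c) Bw mulmx0 add0r mxE.
split; first by apply: mulr_ge0 => //; apply: rn_ge0.
apply: le_trans (_ : rn a * \det G <= _); last by apply: ler_wpM2l => //; apply: rn_ge0.
apply: ler_wpM2r => //; rewrite ra lerDl; apply: rn_ge0.
Qed.

Lemma e_ip n (i0 : 'I_n) (x : 'cV[R]_n) : (x^T *m delta_mx i0 0) = (x i0 0)%:M.
Proof. by rewrite -colE [LHS]mx11_scalar !mxE. Qed.

Lemma msq_tr n (X : 'M[R]_n) : msq X = \tr (X *m X^T).
Proof.
rewrite /msq /mxtrace; apply: eq_bigr => i _; rewrite mxE.
by apply: eq_bigr => j _; rewrite mxE expr2.
Qed.

Lemma transform n (i0 : 'I_n) (hn : (1 < n)%N) (M : 'M[R]_n) :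
  exists N : 'M[R]_n,
    [/\ \det N = \det M, msq N = msq M & N i0 i0 = msum M / n%:R].
Proof.
pose t : R := (Num.sqrt n%:R)^-1.
have n0 : (0 : R) < n%:R by rewrite ltr0n; apply: leq_trans hn.
have t2 : t * t = n%:R^-1.
  by rewrite /t -invfM -expr2 sqr_sqrtr // ltW.
have t1 : t != 1.
  rewrite /t invr_eq1; apply/eqP => h.
  have : Num.sqrt (n%:R : R) ^+ 2 = 1 by rewrite h expr1n.
  by rewrite sqr_sqrtr ?ltW // => /eqP; rewrite pnatr_eq1 => /eqP h1; rewrite h1 in hn.
pose e : 'cV[R]_n := delta_mx i0 0.
pose u : 'cV[R]_n := const_mx t.
pose v := u - e.
have uu : u^T *m u = 1%:M.
  rewrite [LHS]mx11_scalar mxE (eq_bigr (fun _ => t * t)) => [|j _]; last by rewrite !mxE.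
  by rewrite sumr_const card_ord -mulr_natr t2 mulVf // gt_eqF.
have ue : u^T *m e = t%:M by rewrite /e e_ip mxE.
have ee : e^T *m e = 1%:M by rewrite /e e_ip mxE !eqxx.
have eu : e^T *m u = t%:M by rewrite -[e^T *m u]trmxK trmx_mul trmxK ue tr_scalar_mx.
pose cc : R := 2 - 2 * t.
have vv : v^T *m v = cc%:M.
  rewrite /v [(u - e)^T]linearB /= mulmxBl !mulmxBr uu ue eu ee /cc.
  by rewrite -!raddfB /=; congr (_%:M); ring.
have cc0 : cc != 0.
  have -> : cc = 2 * (1 - t) by rewrite /cc; ring.
  by rewrite mulf_neq0 ?pnatr_eq0 // subr_eq0 eq_sym.
pose s := 2 / cc.
pose H := 1%:M - s *: (v *m v^T).
have HT : H^T = H by rewrite /H linearB /= trmx1 linearZ /= trmx_mul trmxK.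
have HH : H *m H = 1%:M.
  rewrite /H mulmxBl !mulmxBr mulmx1 mul1mx -!scalemxAl -!scalemxAr.
  rewrite mulmx1 mulmxA -(mulmxA v v^T v) vv mul_mx_scalar -scalemxAl !scalerA.
  have -> : s * (s * cc) = s + s by rewrite /s; field.
  set X := s *: _; rewrite scalerDl -/X.
  have -> : X - (X + X) = - X by rewrite opprD addrA subrr add0r.
  by rewrite opprK subrK.
have He : H *m e = u.
  have ve : v^T *m e = (t - 1)%:M.
    by rewrite /v [(u - e)^T]linearB /= mulmxBl ue ee raddfB.
  rewrite /H mulmxBl mul1mx -scalemxAl -mulmxA ve mul_mx_scalar scalerA.
  have -> : s * (t - 1) = -1.
    rewrite /s; move: cc0; rewrite /cc => cc0; field => //.
  by rewrite scaleN1r opprK /v addrC subrK.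
exists (H *m M *m H); split.
- by rewrite !det_mulmx mulrAC -det_mulmx HH det1 mul1r.
- rewrite !msq_tr !trmx_mul HT -!mulmxA (mulmxA H H) HH mul1mx.
  by rewrite mxtrace_mulC -!mulmxA HH mulmx1.
- have eNe : e^T *m (H *m M *m H *m e) = ((H *m M *m H) i0 i0)%:M.
    rewrite -[LHS]trmxK trmx_mul trmxK /e e_ip tr_scalar_mx; congr (_%:M).
    by rewrite -colE mxE.
  have : u^T *m (M *m u) = (msum M / n%:R)%:M.
    rewrite [LHS]mx11_scalar; congr (_%:M); rewrite mxE /msum mulrC -t2 big_distrr /=.
    apply: eq_bigr => i _; rewrite !mxE big_distrr /= mulr_sumr; apply: eq_bigr => j _.
    by rewrite !mxE; ring.
  rewrite -He trmx_mul HT !mulmxA; move: eNe; rewrite !mulmxA => ->.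
  by move/(congr1 (fun A : 'M[R]_1 => A 0 0)); rewrite !mxE !eqxx mulr1n.
Qed.
Lemma agm_full n (E : 'I_n -> R) : (forall i, 0 <= E i) ->
  \prod_i E i <= ((\sum_i E i) / n%:R) ^+ n ?= iff [forall i, forall j, E i == E j].
Proof.
move=> E0; have := @leif_AGM R _ 'I_n E.
by rewrite card_ord => h; apply: h => i _.
Qed.

Lemma agm2 k (a b : R) : (0 < k)%N -> 0 <= a -> 0 <= b ->
  a * b ^+ k <= ((a + k%:R * b) / k.+1%:R) ^+ k.+1 ?= iff (a == b).
Proof.
move=> k0 a0 b0.
pose E := fun i : 'I_k.+1 => if i == ord0 then a else b.
have := @agm_full k.+1 E.
have pE : \prod_i E i = a * b ^+ k.
  rewrite big_ord_recl /E eqxx; congr (_ * _).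
  by rewrite (eq_bigr (fun _ => b)) ?prodr_const ?card_ord // => i _; rewrite (negbTE (neq_lift _ _)).
have sE : \sum_i E i = a + k%:R * b.
  rewrite big_ord_recl /E eqxx; congr (_ + _).
  by rewrite (eq_bigr (fun _ => b)) ?sumr_const ?card_ord ?mulr_natl // => i _; rewrite (negbTE (neq_lift _ _)).
have E0 : forall i, 0 <= E i by move=> i; rewrite /E; case: ifP.
rewrite pE sE => /(_ E0) [h1 h2].
split => //; rewrite h2; apply/forallP/eqP => [h | eab].
  have := h ord0; move/forallP/(_ (lift ord0 (Ordinal k0))).
  have hl : (lift ord0 (Ordinal k0) == ord0) = false by rewrite eq_sym (negbTE (neq_lift _ _)).
  by rewrite /E eqxx hl => /eqP.
by move=> i; apply/forallP => j; rewrite /E eab; case: ifP; case: ifP.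
Qed.

Lemma mono k (S x y : R) : (0 < k)%N -> S <= k.+1%:R * x -> x <= y -> y <= S ->
  0 <= x -> y * (S - y) ^+ k <= x * (S - x) ^+ k.
Proof.
move=> k0 hS hxy hyS x0.
have [ex|xn0] := eqVneq x 0.
  rewrite ex mulr0 in hS; rewrite ex in hxy x0 *.
  have y0 : y = 0 by lra.
  by rewrite y0 !mul0r.
have xp : 0 < x by rewrite lt0r xn0.
have c0 : 0 <= S - x by rewrite subr_ge0 (le_trans hxy).
have [cE|cn0] := eqVneq (S - x) 0.
  have ey : y = x.
    lra.
  by rewrite ey.
have cp : 0 < S - x by rewrite lt0r cn0.
set c := S - x.
have a0 : 0 <= y * c by rewrite mulr_ge0 // (le_trans x0 hxy) // ltW.
have b0 : 0 <= (S - y) * x by rewrite mulr_ge0 // ?subr_ge0 // ltW.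
have [h1 _] := agm2 k0 a0 b0.
have hm : (y * c + k%:R * ((S - y) * x)) / k.+1%:R <= x * c.
  rewrite ler_pdivrMr ?ltr0Sn //.
  rewrite -subr_ge0.
  have -> : x * c * k.+1%:R - (y * c + k%:R * ((S - y) * x)) = (y - x) * (k.+1%:R * x - S).
    by rewrite /c -[k.+1]addn1 natrD; ring.
  by rewrite mulr_ge0 // subr_ge0.
have m0 : 0 <= (y * c + k%:R * ((S - y) * x)) / k.+1%:R.
  by rewrite divr_ge0 // addr_ge0 // mulr_ge0.
have xc0 : 0 <= x * c by rewrite mulr_ge0 // ltW.
have h2 := le_trans h1 (lerXn2r k.+1 m0 xc0 hm).
have pos : 0 < x ^+ k * c by rewrite mulr_gt0 // exprn_gt0.
rewrite -(ler_pM2r pos).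
have e1 : y * (S - y) ^+ k * (x ^+ k * c) = y * c * ((S - y) * x) ^+ k.
  by rewrite exprMn; ring.
have e2 : (x * c) ^+ k.+1 = x * c ^+ k * (x ^+ k * c).
  by rewrite exprMn !exprS; ring.
by rewrite e1 -e2.
Qed.
End H.

Lemma sq_le (R : rcfType) (a b : R) : 0 <= b -> a ^+ 2 <= b ^+ 2 -> `|a| <= b.
Proof.
move=> b0 h; rewrite -(ler_pXn2r (n:=2)) //= ?real_normK ?num_real //.
by rewrite qualifE /= normr_ge0.
Qed.

Lemma sq_lt (R : rcfType) (a b : R) : 0 <= a -> 0 <= b -> a ^+ 2 < b ^+ 2 -> a < b.
Proof. by move=> a0 b0; rewrite ltr_pXn2r. Qed.

Unset Implicit Arguments.

Theorem mainTheorem5 (R : rcfType) (n : nat) (hn : (2 <= n)%N) (M : 'M[R]_n) :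
  let alpha := msum M / n%:R in
  let beta := msq M / n%:R in
  let kappa := (n%:R * beta - alpha ^+ 2) / (n%:R - 1) in
  [/\ alpha ^+ 2 < beta -> `|\det M| <= Num.sqrt beta ^+ n,
      alpha ^+ 2 = beta ->
        `|\det M| <= `|alpha| * Num.sqrt kappa ^+ n.-1
        /\ `|alpha| * Num.sqrt kappa ^+ n.-1 = Num.sqrt beta ^+ n
    & beta < alpha ^+ 2 ->
        `|\det M| <= `|alpha| * Num.sqrt kappa ^+ n.-1
        /\ `|alpha| * Num.sqrt kappa ^+ n.-1 < Num.sqrt beta ^+ n].
Proof.
move=> alpha beta kappa.
have n0 : (0 < n)%N by apply: leq_trans hn.
pose i0 := Ordinal n0.
have [N [dN qN aN]] := transform i0 hn M.
rewrite -[msum M / n%:R]/alpha in aN.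
pose r i := rn (row i N).
have r0 : forall i, 0 <= r i by move=> i; apply: rn_ge0.
have D2 : \det M ^+ 2 <= \prod_i r i.
  have [_ h] := hadamard N.
  by rewrite -dN expr2 -{2}det_tr -det_mulmx.
have nR : (0:R) < n%:R by rewrite ltr0n.
have Sr : \sum_i r i = n%:R * beta.
  rewrite /beta mulrC divfK ?gt_eqF // -qN /msq; apply: eq_bigr => i _.
  by rewrite /r /rn; apply: eq_bigr => j _; rewrite mxE.
have ra : alpha ^+ 2 <= r i0.
  rewrite /r /rn (bigD1 i0) //= !mxE aN lerDl.
  by apply: sumr_ge0 => j _; apply: sqr_ge0.
have b0 : 0 <= beta.
  apply: divr_ge0; last exact: ltW.
  by apply: sumr_ge0 => i _; apply: sumr_ge0 => j _; apply: sqr_ge0.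
have B1 : \prod_i r i <= beta ^+ n.
  have [h _] := agm_full r0.
  by move: h; rewrite Sr [n%:R * beta]mulrC mulfK ?gt_eqF.
have sb : Num.sqrt beta ^+ n ^+ 2 = beta ^+ n by rewrite -exprM mulnC exprM sqr_sqrtr.
have C1 : `|\det M| <= Num.sqrt beta ^+ n.
  by apply: sq_le; rewrite ?exprn_ge0 ?sqrtr_ge0 // sb (le_trans D2 B1).
have n1 : (n%:R - 1 : R) != 0.
  rewrite subr_eq0 pnatr_eq1; apply/eqP => e1; by rewrite e1 in hn.
split => // [hab|hab].
  have ka : kappa = beta.
    rewrite /kappa -hab; move: n1; set m := (n%:R : R) => n1; field.
    by [].
  have e : `|alpha| * Num.sqrt kappa ^+ n.-1 = Num.sqrt beta ^+ n.
    by rewrite ka -sqrtr_sqr hab -exprS prednK.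
  by rewrite e.
have [k nk] : exists k, n = k.+1 by exists n.-1; rewrite prednK.
subst n => /=.
have k0 : (0 < k)%N by [].
have kR : (k.+1%:R - 1 : R) = k%:R by rewrite -addn1 natrD addrK.
set S := k.+1%:R * beta.
have PD : \prod_i r i = r i0 * \prod_(i | i != i0) r i by rewrite (bigD1 i0).
have SD : S = r i0 + \sum_(i | i != i0) r i by rewrite /S -Sr (bigD1 i0).
have rS : r i0 <= S by rewrite SD lerDl; apply: sumr_ge0 => i _.
have AG := @leif_AGM R _ (predC1 i0) r.
rewrite cardC1 card_ord /= in AG.
have [AG1 _] := AG (fun i _ => r0 i).
have eS : S - r i0 = \sum_(i | i != i0) r i by rewrite SD addrC addKr.
have P1 : \prod_(i | i != i0) r i <= ((S - r i0) / k%:R) ^+ k by rewrite eS; exact: AG1.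
have k0R : (0:R) < k%:R by rewrite ltr0n.
have a0 : 0 <= alpha ^+ 2 by apply: sqr_ge0.
have kap : kappa = (S - alpha ^+ 2) / k%:R by rewrite /kappa kR.
have kp0 : 0 <= kappa.
  by rewrite kap; apply: divr_ge0; [rewrite subr_ge0; exact: (le_trans ra rS) | exact: ltW].
have Sa : S <= k.+1%:R * alpha ^+ 2 by rewrite /S; apply: ler_wpM2l; [apply: ler0n | exact: ltW].
have Q : \det M ^+ 2 <= alpha ^+ 2 * kappa ^+ k.
  apply: (le_trans D2); rewrite PD.
  apply: (le_trans (ler_wpM2l (r0 i0) P1)).
  rewrite kap (expr_div_n (S - r i0)) (expr_div_n (S - alpha ^+ 2)).
  rewrite (mulrA (r i0)) (mulrA (alpha ^+ 2)).
  apply: ler_wpM2r; first by rewrite invr_ge0 exprn_ge0 // ltW.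
  exact: mono.
have sq : (`|alpha| * Num.sqrt kappa ^+ k) ^+ 2 = alpha ^+ 2 * kappa ^+ k.
  by rewrite exprMn real_normK ?num_real // -exprM mulnC exprM sqr_sqrtr.
split.
  by apply: sq_le; rewrite ?mulr_ge0 ?normr_ge0 ?exprn_ge0 ?sqrtr_ge0 // sq.
apply: sq_lt; rewrite ?mulr_ge0 ?normr_ge0 ?exprn_ge0 ?sqrtr_ge0 // sq sb.
have [hle h] := agm2 k0 a0 kp0.
have eb : (alpha ^+ 2 + k%:R * kappa) / k.+1%:R = beta.
  have kn0 : (k%:R : R) != 0 by rewrite gt_eqF.
  have kn1 : (k.+1%:R : R) != 0 by rewrite pnatr_eq0.
  rewrite kap /S; move: kn0 kn1; set kk := (k%:R : R); set kk1 := (k.+1%:R : R) => kn0 kn1.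
  field; apply/andP; split; [by rewrite addrC natr1 pnatr_eq0 | by rewrite pnatr_eq0 -lt0n].
rewrite eb in hle h.
rewrite lt_neqAle hle andbT h; apply/eqP => ek.
have : alpha ^+ 2 = beta.
  move: ek; rewrite kap /S => ek.
  have kn0 : (k%:R : R) != 0 by rewrite gt_eqF.
  have : k%:R * alpha ^+ 2 = k.+1%:R * beta - alpha ^+ 2 by rewrite {1}ek mulrC divfK.
  rewrite -natr1 mulrDl mul1r => e2.
  have : k.+1%:R * alpha ^+ 2 = k.+1%:R * beta by rewrite -natr1 mulrDl mul1r; lra.
  by move/mulfI; apply; rewrite pnatr_eq0.
by move=> e; rewrite e ltxx in hab.
Qed.
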